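(* Let $\mathcal{S}\subseteq\mathcal{X}\times\mathcal{Y}$ and $f:\mathcal{X}\times\mathcal{Y}\to\mathcal{V}$. For every $(Q_0,\dots,Q_{|\mathcal{Y}|-1})\in\mathcal{Q}_n^{|\mathcal{Y}|}$, the compatible hyperedge $e(Q_0,\dots,Q_{|\mathcal{Y}|-1})$ is solvable for $(\mathcal{S},f)$; furthermore there exists $\tilde e\in\mathcal{E}(\mathcal{S},f)$ with $e(Q_0,\dots,Q_{|\mathcal{Y}|-1})\subseteq\tilde e$.
   Context: Finite alphabets, $\mathcal{Y}=\{0,\dots,|\mathcal{Y}|-1\}$. $\mathcal{Q}_n=\mathcal{P}_n(\mathcal{V})$, the set of types of sequences in $\mathcal{V}^n$. A symbol $a\in\mathcal{X}$ is compatible with $(Q_0,\dots,Q_{|\mathcal{Y}|-1})$ if for all $b_1,b_2$ with $(a,b_1),(a,b_2)\in\mathcal{S}$: $nQ_{b_1}(v)-nQ_{b_2}(v)=\mathbf{1}[f(a,b_1)=v]-\mathbf{1}[f(a,b_2)=v]$ for all $v$; $e(Q_0,\dots,Q_{|\mathcal{Y}|-1})$ is the set of compatible symbols. For $\mathcal{A}\times\mathcal{B}\subseteq\mathcal{X}\times\mathcal{Y}$, a simple loop is a set $\{(a_0,b_0),(a_0,b_1),(a_1,b_1),\dots,(a_{k-1},b_{k-1}),(a_{k-1},b_0)\}\subseteq(\mathcal{A}\times\mathcal{B})\cap\mathcal{S}$ with the $a_i$ pairwise distinct and the $b_i$ pairwise distinct; with $\mathcal{I}_+(v)=\{i:f(a_i,b_i)=v\}$,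 $\mathcal{I}_-(v)=\{i:f(a_i,b_{i+1\bmod k})=v\}$, $\mathcal{A}\times\mathcal{B}$ is solvable for $(\mathcal{S},f)$ if every simple loop in it has $|\mathcal{I}_+(v)|=|\mathcal{I}_-(v)|$ for all $v$. $e\subseteq\mathcal{X}$ is solvable if $e\times\mathcal{Y}$ is solvable; $\mathcal{E}(\mathcal{S},f)$ is the set of inclusion-maximal solvable subsets of $\mathcal{X}$. *)

(* Defs.v *)
From HB Require Import structures.
From mathcomp Require Import all_boot all_order all_algebra.
Set Implicit Arguments. Unset Strict Implicit. Unset Printing Implicit Defensive.
Import Order.TTheory GRing.Theory Num.Theory.

Local Open Scope ring_scope.

Definition is_type (V : finType) (n : nat) (Q : V -> rat) : Prop :=
  exists x : n.-tuple V, forall v, Q v = (count_mem v x)%:R / n%:R.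

Definition compat (X Y V : finType) (S : {set X * Y}) (f : X -> Y -> V)
    (n : nat) (Q : Y -> V -> rat) : {set X} :=
  [set a | [forall b1, forall b2,
     (((a, b1) \in S) && ((a, b2) \in S)) ==>
     [forall v, n%:R * Q b1 v - n%:R * Q b2 v ==
                ((f a b1 == v)%:R - (f a b2 == v)%:R : rat)]]].

(* A x B is solvable for (S,f): every simple loop
   {(a_0,b_0),(a_0,b_1),(a_1,b_1),...,(a_{k-1},b_{k-1}),(a_{k-1},b_0)}
   in (A x B) cap S (a_i pairwise distinct, b_i pairwise distinct)
   satisfies |I_+(v)| = |I_-(v)| for all v. *)
Definition solvable (X Y V : finType) (S : {set X * Y}) (f : X -> Y -> V)
    (A : {set X}) (B : {set Y}) : Prop :=
  forall (k : nat) (a : 'I_k -> X) (b : 'I_k -> Y),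
    injective a -> injective b ->
    (forall i, a i \in A) -> (forall i, b i \in B) ->
    (forall i, (a i, b i) \in S) ->
    (forall i, (a i, b (ordS i)) \in S) ->
    forall v : V,
      #|[set i | f (a i) (b i) == v]| = #|[set i | f (a i) (b (ordS i)) == v]|.

Definition solvable_set (X Y V : finType) (S : {set X * Y}) (f : X -> Y -> V)
    (e : {set X}) : Prop := solvable S f e [set: Y].

Definition maximal_solvable (X Y V : finType) (S : {set X * Y}) (f : X -> Y -> V)
    (e : {set X}) : Prop :=
  solvable_set S f e /\
  forall e' : {set X}, e \subset e' -> solvable_set S f e' -> e' = e.

(* Main.v *)
Require Import Defs.
From mathcomp Require Import all_boot all_order all_algebra.
From mathcomp Require Import zify.
From Stdlib Require Import Classical.
Import Order.TTheory GRing.Theory Num.Theory.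

Lemma card_sumR (I : finType) (P : pred I) :
  (\sum_i ((P i : nat)%:R : rat) = (#|[set i | P i]|)%:R)%R.
Proof.
rewrite -natr_sum; congr (_%:R)%R.
rewrite -sum1_card [RHS]big_mkcond /=.
by apply: eq_bigr => i _; rewrite inE; case: (P i).
Qed.

Lemma compat_solvable (X Y V : finType) (S : {set X * Y}) (f : X -> Y -> V)
    (n : nat) (Q : Y -> V -> rat) : solvable_set S f (compat S f n Q).
Proof.
move=> k a b _ _ Ha _ HS1 HS2 v.
have key : forall i : 'I_k,
  (n%:R * Q (b i) v - n%:R * Q (b (ordS i)) v =
   (f (a i) (b i) == v)%:R - (f (a i) (b (ordS i)) == v)%:R :> rat)%R.
  move=> i; have := Ha i; rewrite inE => /forallP /(_ (b i)) /forallP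
    /(_ (b (ordS i))) /implyP; rewrite HS1 HS2 => /(_ isT) /forallP /(_ v) /eqP.
  done.
have : (\sum_i ((f (a i) (b i) == v)%:R - (f (a i) (b (ordS i)) == v)%:R) = 0 :> rat)%R.
  rewrite -(eq_bigr _ (fun i _ => key i)) sumrB.
  by rewrite (reindex_inj (@ordS_inj k)) /= subrr.
rewrite sumrB !card_sumR => /eqP; rewrite subr_eq0 eqr_nat => /eqP.
done.
Qed.

Lemma exists_max (X Y V : finType) (S : {set X * Y}) (f : X -> Y -> V) :
  forall m (e : {set X}), #|X| - #|e| <= m -> solvable_set S f e ->
  exists2 e' : {set X}, maximal_solvable S f e' & e \subset e'.
Proof.
elim=> [|m IH] e Hm Hs.
- exists e => //; split => // e' He' Hs'.
  apply/eqP; rewrite eq_sym eqEcard He' /=.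
  have : #|e'| <= #|X| := max_card _. move: Hm; lia.
- case: (classic (exists e2 : {set X}, e \proper e2 /\ solvable_set S f e2)).
  + move=> [e2 [Hp Hs2]].
    have Hm2 : #|X| - #|e2| <= m.
      have := proper_card Hp; have : #|e2| <= #|X| := max_card _.
      move: Hm; lia.
    have [e3 H3 H23] := IH e2 Hm2 Hs2.
    exists e3 => //; exact: subset_trans (proper_sub Hp) H23.
  + move=> Hn; exists e => //; split => // e' He' Hs'.
    apply/eqP; rewrite eq_sym eqEsubset He' /=.
    apply: contraT => Hne; exfalso; apply: Hn; exists e'; split => //.
    by rewrite properE He'.
Qed.

Theorem lemma3 (X Y V : finType) (S : {set X * Y}) (f : X -> Y -> V)
    (n : nat) (Q : Y -> V -> rat) :
  (forall b, is_type n (Q b)) ->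
  solvable_set S f (compat S f n Q) /\
  exists2 e' : {set X}, maximal_solvable S f e' & compat S f n Q \subset e'.
Proof.
move=> _; split; first exact: compat_solvable.
have := @exists_max X Y V S f.
move=> /(_ _ (compat S f n Q) (leqnn _)); apply; exact: compat_solvable.
Qed.
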